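(* Let $R>0$ and $\gamma>1$. For admissible states (density $\rho>0$, temperature $T>0$, velocity $V=(V_1,V_2,V_3)$), let $u=(\rho,\rho V_1,\rho V_2,\rho V_3,\rho E)^T$ with $E=\frac{R}{\gamma-1}T+\frac12|V|^2$. For two admissible states $L,R$ and auxiliary variables $Z=(Z_1,\dots,Z_5)$ depending on the state, write $$\overline{Z_k}=\tfrac12(Z_{k,L}+Z_{k,R}),\qquad \overline{Z_k}_{\log}=\frac{Z_{k,R}-Z_{k,L}}{\log Z_{k,R}-\log Z_{k,L}}$$ (with $\overline{Z_k}_{\log}=Z_{k,L}$ when $Z_{k,L}=Z_{k,R}$). Also write $\overline{Z_k^2}=\frac12(Z_{k,L}^2+Z_{k,R}^2)$. Define two two-point functions as follows. (i) With $Z=\bigl(1/\sqrt T,\;V_1/\sqrt T,\;V_2/\sqrt T,\;V_3/\sqrt T,\;\rho\sqrt T\bigr)$: $$U_1^{sc}(u_L,u_R)=\begin{pmatrix}\overline{Z_5}_{\log}\overline{Z_1}\\ \overline{Z_5}_{\log}\overline{Z_2}\\ \overline{Z_5}_{\log}\overline{Z_3}\\ \overline{Z_5}_{\log}\overline{Z_4}\\ \tfrac12\overline{Z_5}_{\log}\Bigl(\frac{R(\gamma+1)}{(\gamma-1)\overline{Z_1}_{\log}}+\frac{1}{\overline{Z_1}}\bigl(\overline{Z_2}^2+\overline{Z_3}^2+\overline{Z_4}^2-R\,\overline{Z_5}/\overline{Z_5}_{\log}\bigr)\Bigr)\end{pmatrix}.$$ (ii) With $Z=(\rho,V_1,V_2,V_3,1/T)$: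 $$U_2^{sc}(u_L,u_R)=\begin{pmatrix}\overline{Z_1}_{\log}\\ \overline{Z_1}_{\log}\overline{Z_2}\\ \overline{Z_1}_{\log}\overline{Z_3}\\ \overline{Z_1}_{\log}\overline{Z_4}\\ \overline{Z_1}_{\log}\Bigl(\frac{R}{(\gamma-1)\overline{Z_5}_{\log}}+\overline{Z_2}^2+\overline{Z_3}^2+\overline{Z_4}^2-\tfrac12\bigl(\overline{Z_2^2}+\overline{Z_3^2}+\overline{Z_4^2}\bigr)\Bigr)\end{pmatrix}.$$ Then each of $U^{sc}=U_1^{sc}$ and $U^{sc}=U_2^{sc}$ has the following properties: - it is symmetric: $U^{sc}(u_L,u_R)=U^{sc}(u_R,u_L)$; - it is consistent: $U^{sc}(u,u)=u$; - it satisfies the shuffle condition $$\bigl(w(u_L)-w(u_R)\bigr)^TU^{sc}(u_L,u_R)=\bigl[w(u_L)^Tu_L-\mathcal S(u_L)\bigr]-\bigl[w(u_R)^Tu_R-\mathcal S(u_R)\bigr].$$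
   Context: Set $c_p=\gamma R/(\gamma-1)$ and specific enthalpy $h=c_pT$. The thermodynamic entropy is $s=\frac{R}{\gamma-1}\log(T/T_\infty)-R\log(\rho/\rho_\infty)$ with fixed reference constants $T_\infty,\rho_\infty>0$. The mathematical entropy is $\mathcal S(u)=-\rho s$. The entropy variables are $$w(u)=\Bigl(\frac{\partial\mathcal S}{\partial u}\Bigr)^T=\Bigl(\frac hT-s-\frac{|V|^2}{2T},\;\frac{V_1}{T},\;\frac{V_2}{T},\;\frac{V_3}{T},\;-\frac1T\Bigr)^T.$$ Notation: $\overline{Z_k}^2$ denotes the square of the arithmetic mean, while $\overline{Z_k^2}$ denotes the arithmetic mean of the squares. *)

(* Defs.v *)
From Stdlib Require Import Reals.
Open Scope R_scope.

Record state := mkState { rho : R; temp : R; V1 : R; V2 : R; V3 : R }.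

Definition admissible (s : state) : Prop := 0 < rho s /\ 0 < temp s.

Record vec5 := mk5 { c1 : R; c2 : R; c3 : R; c4 : R; c5 : R }.

Definition dot5 (a b : vec5) : R :=
  c1 a * c1 b + c2 a * c2 b + c3 a * c3 b + c4 a * c4 b + c5 a * c5 b.

Definition sub5 (a b : vec5) : vec5 :=
  mk5 (c1 a - c1 b) (c2 a - c2 b) (c3 a - c3 b) (c4 a - c4 b) (c5 a - c5 b).

Definition Vsq (s : state) : R := V1 s ^ 2 + V2 s ^ 2 + V3 s ^ 2.

Section Gas.
Variables (Rg gamma Tinf rhoinf : R).

Definition energy (s : state) : R := Rg / (gamma - 1) * temp s + / 2 * Vsq s.

Definition cons (s : state) : vec5 :=
  mk5 (rho s) (rho s * V1 s) (rho s * V2 s) (rho s * V3 s) (rho s * energy s).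

Definition cp : R := gamma * Rg / (gamma - 1).
Definition enthalpy (s : state) : R := cp * temp s.

Definition entropy_s (s : state) : R :=
  Rg / (gamma - 1) * ln (temp s / Tinf) - Rg * ln (rho s / rhoinf).

Definition math_entropy (s : state) : R := - rho s * entropy_s s.

Definition entvar (s : state) : vec5 :=
  mk5 (enthalpy s / temp s - entropy_s s - Vsq s / (2 * temp s))
      (V1 s / temp s) (V2 s / temp s) (V3 s / temp s) (- / temp s).


End Gas.

Definition amean (a b : R) : R := / 2 * (a + b).
Definition amean_sq (a b : R) : R := / 2 * (a ^ 2 + b ^ 2).
Definition logmean (a b : R) : R :=
  if Req_EM_T a b then a else (b - a) / (ln b - ln a).

Definition U1sc (Rg gamma : R) (sL sR : state) : vec5 :=
  let z1 s := / sqrt (temp s) in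
  let z2 s := V1 s / sqrt (temp s) in
  let z3 s := V2 s / sqrt (temp s) in
  let z4 s := V3 s / sqrt (temp s) in
  let z5 s := rho s * sqrt (temp s) in
  let Z1 := amean (z1 sL) (z1 sR) in
  let Z2 := amean (z2 sL) (z2 sR) in
  let Z3 := amean (z3 sL) (z3 sR) in
  let Z4 := amean (z4 sL) (z4 sR) in
  let Z5 := amean (z5 sL) (z5 sR) in
  let Z1l := logmean (z1 sL) (z1 sR) in
  let Z5l := logmean (z5 sL) (z5 sR) in
  mk5 (Z5l * Z1) (Z5l * Z2) (Z5l * Z3) (Z5l * Z4)
      (/ 2 * Z5l * (Rg * (gamma + 1) / ((gamma - 1) * Z1l)
                    + / Z1 * (Z2 ^ 2 + Z3 ^ 2 + Z4 ^ 2 - Rg * Z5 / Z5l))).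

Definition U2sc (Rg gamma : R) (sL sR : state) : vec5 :=
  let Z2 := amean (V1 sL) (V1 sR) in
  let Z3 := amean (V2 sL) (V2 sR) in
  let Z4 := amean (V3 sL) (V3 sR) in
  let Z1l := logmean (rho sL) (rho sR) in
  let Z5l := logmean (/ temp sL) (/ temp sR) in
  mk5 Z1l (Z1l * Z2) (Z1l * Z3) (Z1l * Z4)
      (Z1l * (Rg / ((gamma - 1) * Z5l) + Z2 ^ 2 + Z3 ^ 2 + Z4 ^ 2
              - / 2 * (amean_sq (V1 sL) (V1 sR) + amean_sq (V2 sL) (V2 sR)
                       + amean_sq (V3 sL) (V3 sR)))).

Definition sc_properties (Rg gamma Tinf rhoinf : R)
    (U : state -> state -> vec5) : Prop :=
  (forall sL sR, admissible sL -> admissible sR -> U sL sR = U sR sL) /\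
  (forall s, admissible s -> U s s = cons Rg gamma s) /\
  (forall sL sR, admissible sL -> admissible sR ->
     dot5 (sub5 (entvar Rg gamma Tinf rhoinf sL) (entvar Rg gamma Tinf rhoinf sR))
          (U sL sR)
     = (dot5 (entvar Rg gamma Tinf rhoinf sL) (cons Rg gamma sL)
          - math_entropy Rg gamma Tinf rhoinf sL)
       - (dot5 (entvar Rg gamma Tinf rhoinf sR) (cons Rg gamma sR)
          - math_entropy Rg gamma Tinf rhoinf sR)).

(* Main.v *)
Require Import Defs.
From Stdlib Require Import Reals Lra.
Open Scope R_scope.

Lemma logmean_refl a : logmean a a = a.
Proof. unfold logmean; destruct (Req_EM_T a a); [reflexivity|contradiction]. Qed.

Lemma logmean_sym a b : 0 < a -> 0 < b -> logmean a b = logmean b a.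
Proof.
  intros Ha Hb; unfold logmean.
  destruct (Req_EM_T a b) as [e|n]; destruct (Req_EM_T b a) as [e'|n'].
  - now rewrite e.
  - now exfalso; apply n'.
  - now exfalso; apply n.
  - assert (ln b - ln a <> 0).
    { intro h. apply n. apply ln_inv; auto; lra. }
    field. split; lra.
Qed.

Lemma logmean_pos a b : 0 < a -> 0 < b -> 0 < logmean a b.
Proof.
  intros Ha Hb; unfold logmean.
  destruct (Req_EM_T a b) as [e|n]; [assumption|].
  destruct (Rlt_or_le a b) as [h|h].
  - assert (ln a < ln b) by (apply ln_increasing; auto).
    apply Rdiv_lt_0_compat; lra.
  - assert (b < a) by lra. assert (ln b < ln a) by (apply ln_increasing; auto).
    unfold Rdiv. replace (b - a) with (-(a-b)) by ring.
    replace (ln b - ln a) with (-(ln a - ln b)) by ring.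
    rewrite <- Ropp_inv_permute by lra. rewrite Rmult_opp_opp.
    apply Rdiv_lt_0_compat; lra.
Qed.

Lemma logmean_prop a b : 0 < a -> 0 < b -> logmean a b * (ln a - ln b) = a - b.
Proof.
  intros Ha Hb; unfold logmean.
  destruct (Req_EM_T a b) as [e|n]; [subst; ring|].
  assert (ln b - ln a <> 0).
  { intro h. apply n. apply ln_inv; auto; lra. }
  field; auto.
Qed.

Lemma amean_sym a b : amean a b = amean b a.
Proof. unfold amean; ring. Qed.
Lemma amean_sq_sym a b : amean_sq a b = amean_sq b a.
Proof. unfold amean_sq; ring. Qed.
Lemma amean_refl a : amean a a = a.
Proof. unfold amean; field. Qed.
Lemma ln_div' x y : 0 < x -> 0 < y -> ln (x / y) = ln x - ln y.
Proof. intros; unfold Rdiv; rewrite ln_mult, ln_Rinv; try ring; auto; apply Rinv_0_lt_compat; auto. Qed.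

Lemma rhs_eq Rg g Ti ri s : 0 < Rg -> 1 < g -> admissible s ->
  dot5 (entvar Rg g Ti ri s) (cons Rg g s) - math_entropy Rg g Ti ri s = Rg * rho s.
Proof.
  intros HR Hg [Hr Ht]. unfold dot5, entvar, cons, math_entropy, enthalpy, cp, energy, Vsq.
  cbn [Defs.c1 c2 c3 c4 c5]. field. split; lra.
Qed.

Lemma U2_shuffle Rg g Ti ri sL sR : 0 < Rg -> 1 < g -> 0 < Ti -> 0 < ri ->
  admissible sL -> admissible sR ->
  dot5 (sub5 (entvar Rg g Ti ri sL) (entvar Rg g Ti ri sR)) (U2sc Rg g sL sR)
  = Rg * rho sL - Rg * rho sR.
Proof.
  intros HR Hg HTi Hri. destruct sL as [rL tL aL bL cL], sR as [rR tR aR bR cR].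
  intros [HrL HtL] [HrR HtR]; cbn [rho temp V1 V2 V3] in *.
  unfold dot5, sub5, entvar, U2sc, enthalpy, cp, entropy_s, Vsq, amean, amean_sq.
  cbn [Defs.c1 c2 c3 c4 c5 rho temp V1 V2 V3].
  pose proof (logmean_prop rL rR HrL HrR) as P1.
  assert (HbL: 0 < / tL) by (apply Rinv_0_lt_compat; lra).
  assert (HbR: 0 < / tR) by (apply Rinv_0_lt_compat; lra).
  pose proof (logmean_prop _ _ HbL HbR) as P5.
  pose proof (logmean_pos rL rR HrL HrR) as Q1.
  pose proof (logmean_pos _ _ HbL HbR) as Q5.
  rewrite !ln_div' by lra. rewrite !ln_Rinv in P5 by lra.
  set (m1 := logmean rL rR) in *. set (m5 := logmean (/tL) (/tR)) in *.
  clearbody m1 m5.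
  set (lrL := ln rL) in *. set (lrR := ln rR) in *.
  set (ltL := ln tL) in *. set (ltR := ln tR) in *.
  clearbody lrL lrR ltL ltR.
  assert (E1 : lrL = lrR + (rL - rR) / m1) by (rewrite <- P1; field; lra).
  assert (E5 : ltL = ltR - (/tL - /tR) / m5) by (rewrite <- P5; field; lra).
  subst lrL ltL. field. repeat split; lra.
Qed.

Lemma U1_shuffle Rg g Ti ri sL sR : 0 < Rg -> 1 < g -> 0 < Ti -> 0 < ri ->
  admissible sL -> admissible sR ->
  dot5 (sub5 (entvar Rg g Ti ri sL) (entvar Rg g Ti ri sR)) (U1sc Rg g sL sR)
  = Rg * rho sL - Rg * rho sR.
Proof.
  intros HR Hg HTi Hri. destruct sL as [rL tL aL bL cL], sR as [rR tR aR bR cR].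
  intros [HrL HtL] [HrR HtR]; cbn [rho temp V1 V2 V3] in *.
  unfold dot5, sub5, entvar, U1sc, enthalpy, cp, entropy_s, Vsq, amean.
  cbn [Defs.c1 c2 c3 c4 c5 rho temp V1 V2 V3].
  pose proof (sqrt_lt_R0 _ HtL) as HqL. pose proof (sqrt_lt_R0 _ HtR) as HqR.
  pose proof (sqrt_sqrt tL ltac:(lra)) as EL. pose proof (sqrt_sqrt tR ltac:(lra)) as ER.
  remember (sqrt tL) as qL. remember (sqrt tR) as qR.
  rewrite <- EL, <- ER. clear HeqqL HeqqR.
  assert (HzL: 0 < / qL) by (apply Rinv_0_lt_compat; lra).
  assert (HzR: 0 < / qR) by (apply Rinv_0_lt_compat; lra).
  assert (H5L: 0 < rL * qL) by (apply Rmult_lt_0_compat; lra).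
  assert (H5R: 0 < rR * qR) by (apply Rmult_lt_0_compat; lra).
  pose proof (logmean_prop _ _ HzL HzR) as P1.
  pose proof (logmean_prop _ _ H5L H5R) as P5.
  pose proof (logmean_pos _ _ HzL HzR) as Q1.
  pose proof (logmean_pos _ _ H5L H5R) as Q5.
  rewrite !ln_div' by (try apply Rmult_lt_0_compat; lra).
  rewrite !ln_mult by lra.
  rewrite !ln_Rinv in P1 by lra. rewrite !ln_mult in P5 by lra.
  set (m1 := logmean (/qL) (/qR)) in *. set (m5 := logmean (rL*qL) (rR*qR)) in *.
  clearbody m1 m5.
  set (lrL := ln rL) in *. set (lrR := ln rR) in *.
  set (lqL := ln qL) in *. set (lqR := ln qR) in *.
  clearbody lrL lrR lqL lqR.
  assert (E1 : lqL = lqR - (/qL - /qR) / m1) by (rewrite <- P1; field; lra).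
  assert (E5 : lrL = lrR + lqR - lqL + (rL*qL - rR*qR) / m5) by (rewrite <- P5; field; lra).
  subst lrL. subst lqL. field. repeat split; lra.
Qed.

Theorem lemma5p1 (Rg gamma Tinf rhoinf : R) :
  0 < Rg -> 1 < gamma -> 0 < Tinf -> 0 < rhoinf ->
  sc_properties Rg gamma Tinf rhoinf (U1sc Rg gamma) /\
  sc_properties Rg gamma Tinf rhoinf (U2sc Rg gamma).
Proof.
  intros HR Hg HTi Hri. split; split; [|split| |split].
  - intros [rL tL aL bL cL] [rR tR aR bR cR] [HrL HtL] [HrR HtR]; cbn [rho temp] in *.
    pose proof (sqrt_lt_R0 _ HtL) as HqL. pose proof (sqrt_lt_R0 _ HtR) as HqR.
    unfold U1sc; cbn [rho temp V1 V2 V3].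
    rewrite (amean_sym (/ sqrt tL)), (amean_sym (aL / sqrt tL)), (amean_sym (bL / sqrt tL)),
      (amean_sym (cL / sqrt tL)), (amean_sym (rL * sqrt tL)).
    rewrite (logmean_sym (/ sqrt tL)) by (apply Rinv_0_lt_compat; lra).
    rewrite (logmean_sym (rL * sqrt tL)) by (apply Rmult_lt_0_compat; lra).
    reflexivity.
  - intros [r t a b c] [Hr Ht]; cbn [rho temp] in *.
    pose proof (sqrt_lt_R0 _ Ht) as Hq. pose proof (sqrt_sqrt t ltac:(lra)) as E.
    unfold U1sc, cons, energy, Vsq; cbn [rho temp V1 V2 V3].
    rewrite !amean_refl, !logmean_refl.
    remember (sqrt t) as q. rewrite <- E. clear Heqq.
    f_equal; field; repeat split; lra.
  - intros sL sR HL HR'. rewrite (rhs_eq _ _ _ _ sL), (rhs_eq _ _ _ _ sR) by auto.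
    now apply U1_shuffle.
  - intros [rL tL aL bL cL] [rR tR aR bR cR] [HrL HtL] [HrR HtR]; cbn [rho temp] in *.
    unfold U2sc; cbn [rho temp V1 V2 V3].
    rewrite (amean_sym aL), (amean_sym bL), (amean_sym cL), (amean_sq_sym aL),
      (amean_sq_sym bL), (amean_sq_sym cL).
    rewrite (logmean_sym rL) by lra.
    rewrite (logmean_sym (/ tL)) by (apply Rinv_0_lt_compat; lra).
    reflexivity.
  - intros [r t a b c] [Hr Ht]; cbn [rho temp] in *.
    unfold U2sc, cons, energy, Vsq, amean_sq; cbn [rho temp V1 V2 V3].
    rewrite !amean_refl, !logmean_refl.
    f_equal; field; repeat split; lra.
  - intros sL sR HL HR'. rewrite (rhs_eq _ _ _ _ sL), (rhs_eq _ _ _ _ sR) by auto.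
    now apply U2_shuffle.
Qed.
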